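(* Let $p\in\mathbb{N}$ and let $a,b,\alpha,\beta$ be positive real numbers such that $\alpha+\beta t>1$ for all $t\in(0,\infty)$. Define \[ \Omega(t)=\frac{p^{b\beta t}e^{a\beta\gamma t}\,\Gamma(\alpha+\beta t)^a}{\Gamma_p(\alpha+\beta t)^b},\qquad t\in(0,\infty). \] Then $\Omega$ is increasing on $(0,\infty)$, and for every $t\in(0,1)$, \[ \frac{p^{-b\beta t}e^{-a\beta\gamma t}\,\Gamma(\alpha)^a}{\Gamma_p(\alpha)^b} <\frac{\Gamma(\alpha+\beta t)^a}{\Gamma_p(\alpha+\beta t)^b} <\frac{p^{b\beta(1-t)}e^{a\beta\gamma(1-t)}\,\Gamma(\alpha+\beta)^a}{\Gamma_p(\alpha+\beta)^b}. \]
   Context: $\Gamma$ is Euler's Gamma function and $\gamma$ is the Euler–Mascheroni constant. For $p\in\mathbb{N}$ and $t>0$, the $p$-Gamma function is $\Gamma_p(t)=\frac{p!\,p^t}{t(t+1)\cdots(t+p)}$. *)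

(* Defs.v *)
From Stdlib Require Import Reals Factorial.
From Coquelicot Require Import Coquelicot.
Open Scope R_scope.

Definition Gamma (t : R) : R :=
  RInt_gen (fun x => Rpower x (t - 1) * exp (- x))
           (at_right 0) (Rbar_locally p_infty).

Definition euler_gamma : R :=
  real (Lim_seq (fun n => sum_f_R0 (fun k => / INR (S k)) n - ln (INR (S n)))).

Fixpoint rising_prod (t : R) (p : nat) : R :=
  match p with
  | O => t
  | S q => rising_prod t q * (t + INR (S q))
  end.

Definition Gamma_p (p : nat) (t : R) : R :=
  INR (Factorial.fact p) * Rpower (INR p) t / rising_prod t p.

Definition Omega (p : nat) (a b alpha beta : R) (t : R) : R :=
  Rpower (INR p) (b * beta * t) * exp (a * beta * euler_gamma * t)
  * Rpower (Gamma (alpha + beta * t)) a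
  / Rpower (Gamma_p p (alpha + beta * t)) b.

(* Main.v *)
Require Import Defs.
From Stdlib Require Import Reals Lra Lia Factorial.
From Coquelicot Require Import Coquelicot.
Open Scope R_scope.

Definition gf (s t : R) : R := Rpower t s * exp (- t).
Notation FF := (filter_prod (at_right 0) (Rbar_locally p_infty)).

Lemma ball_R : forall x e y : R, ball x e y <-> Rabs (y - x) < e.
Proof. intros. split; intro H; exact H. Qed.

Lemma FF_ev : forall d M, 0 < d -> FF (fun ab => 0 < fst ab < d /\ M < snd ab).
Proof.
  intros d M Hd.
  apply (Filter_prod _ _ _ (fun a => 0 < a < d) (fun b => M < b)).
  - unfold at_right, within, locally. exists (mkposreal d Hd). intros y Hy Hy0. simpl in Hy.
    change (Rabs (y - 0) < d) in Hy. rewrite Rminus_0_r in Hy. split; auto.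
    apply Rabs_lt_between in Hy. lra.
  - exists M. auto.
  - intros; simpl; auto.
Qed.

Lemma gf_exp : forall s t, gf s t = exp (s * ln t - t).
Proof. intros. unfold gf, Rpower. unfold Rminus. rewrite exp_plus. reflexivity. Qed.

Lemma gf_pos : forall s t, 0 < gf s t.
Proof. intros. rewrite gf_exp. apply exp_pos. Qed.

Lemma ln_le_sub1 : forall y, 0 < y -> ln y <= y - 1.
Proof. intros y Hy. pose proof (exp_ineq1_le (ln y)). rewrite exp_ln in H; lra. Qed.

Lemma exp_le_exp : forall x y, x <= y -> exp x <= exp y.
Proof. intros x y H. destruct (Rle_lt_or_eq_dec x y H). left; apply exp_increasing; auto. subst; lra. Qed.

Lemma gf_le1 : forall s t, 0 <= s -> 0 < t <= 1 -> gf s t <= 1.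
Proof.
  intros s t Hs Ht. unfold gf, Rpower.
  assert (ln t <= 0) by (rewrite <- ln_1; apply ln_le; lra).
  assert (exp (s * ln t) <= 1) by (rewrite <- exp_0; apply exp_le_exp; nra).
  assert (exp (- t) <= 1) by (rewrite <- exp_0; apply exp_le_exp; lra).
  pose proof (exp_pos (s * ln t)). pose proof (exp_pos (-t)). nra.
Qed.

Lemma gf_le_t : forall s t, 1 <= s -> 0 < t <= 1 -> gf s t <= t.
Proof.
  intros s t Hs Ht. unfold gf, Rpower.
  assert (ln t <= 0) by (rewrite <- ln_1; apply ln_le; lra).
  assert (exp (s * ln t) <= t) by (rewrite <- (exp_ln t) at 2 by lra; apply exp_le_exp; nra).
  assert (exp (- t) <= 1) by (rewrite <- exp_0; apply exp_le_exp; lra).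
  pose proof (exp_pos (s * ln t)). pose proof (exp_pos (-t)). nra.
Qed.

Definition Cb (s : R) := exp ((s + 2) * (ln (s + 2) - 1)).

Lemma Cb_pos : forall s, 0 < Cb s.
Proof. intros; apply exp_pos. Qed.

Lemma gf_tail : forall s t, 0 <= s -> 0 < t -> gf s t <= Cb s / (t * t).
Proof.
  intros s t Hs Ht.
  assert (E : gf s t * (t * t) = exp ((s + 2) * ln t - t)).
  { rewrite gf_exp. replace (t * t) with (exp (ln t) * exp (ln t)) by (rewrite exp_ln; lra).
    rewrite <- !exp_plus. f_equal. ring. }
  assert (I : (s + 2) * ln t - t <= (s + 2) * (ln (s + 2) - 1)).
  { pose proof (ln_le_sub1 (t / (s + 2))). rewrite ln_div in H by lra.
    assert (0 < t / (s+2)) by (apply Rdiv_lt_0_compat; lra).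
    specialize (H H0).
    assert ((s+2) * (ln t - ln (s+2)) <= (s+2) * (t/(s+2) - 1)) by (apply Rmult_le_compat_l; lra).
    replace ((s+2) * (t/(s+2) - 1)) with (t - (s+2)) in H1 by (field; lra). nra. }
  assert (gf s t * (t * t) <= Cb s) by (rewrite E; unfold Cb; apply exp_le_exp; exact I).
  apply Rmult_le_reg_r with (t * t). nra.
  unfold Rdiv. rewrite Rmult_assoc, Rinv_l by nra. lra.
Qed.

Lemma gf_cont : forall s t, 0 < t -> continuous (gf s) t.
Proof.
  intros s t Ht. apply (@ex_derive_continuous R_AbsRing R_NormedModule). unfold gf, Rpower.
  auto_derive. exact Ht.
Qed.

Lemma gf_exRInt : forall s a b, 0 < a -> 0 < b -> ex_RInt (gf s) a b.
Proof.
  intros s a b Ha Hb. apply (@ex_RInt_continuous R_CompleteNormedModule). intros z Hz. apply gf_cont.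
  assert (0 < Rmin a b) by (apply Rmin_glb_lt; lra). lra.
Qed.

Lemma RInt_abs_bound : forall f g a b, ex_RInt f a b -> ex_RInt g a b ->
  (forall t, Rmin a b <= t <= Rmax a b -> Rabs (f t) <= g t) ->
  Rabs (RInt f a b) <= Rabs (RInt g a b).
Proof.
  assert (K : forall f g a b, a <= b -> ex_RInt f a b -> ex_RInt g a b ->
    (forall t, a <= t <= b -> Rabs (f t) <= g t) ->
    Rabs (RInt f a b) <= Rabs (RInt g a b)).
  { intros f g a b Hab Hf Hg H.
    assert (RInt f a b <= RInt g a b).
    { apply RInt_le; auto. intros x Hx. specialize (H x ltac:(lra)).
      apply Rabs_le_between in H. lra. }
    assert (RInt (fun t => opp (g t)) a b <= RInt f a b).
    { apply RInt_le; auto. apply ex_RInt_opp in Hg. exact Hg.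
      intros x Hx. specialize (H x ltac:(lra)). apply Rabs_le_between in H.
      change (opp (g x)) with (- g x). lra. }
    rewrite (@RInt_opp R_CompleteNormedModule) in H1 by exact Hg. change (opp (RInt g a b)) with (- RInt g a b) in H1.
    rewrite (Rabs_right (RInt g a b)) by lra. apply Rabs_le. lra. }
  intros f g a b Hf Hg H. destruct (Rle_or_lt a b) as [Hab|Hab].
  - apply K; auto. intros t Ht. apply H. rewrite Rmin_left, Rmax_right; lra.
  - apply ex_RInt_swap in Hf. apply ex_RInt_swap in Hg.
    rewrite <- (@opp_RInt_swap R_CompleteNormedModule f b a Hf).
    rewrite <- (@opp_RInt_swap R_CompleteNormedModule g b a Hg).
    change (opp (RInt f b a)) with (- RInt f b a).
    change (opp (RInt g b a)) with (- RInt g b a). rewrite !Rabs_Ropp.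
    apply K; auto. lra.
    intros t Ht. apply H. rewrite Rmin_right, Rmax_left; lra.
Qed.

Lemma inv2_RInt : forall C a b, 0 < a -> 0 < b -> RInt (fun t => C / (t*t)) a b = C/a - C/b.
Proof.
  intros C a b Ha Hb.
  assert (Hm : 0 < Rmin a b) by (apply Rmin_glb_lt; lra).
  apply is_RInt_unique.
  replace (C/a - C/b) with (minus ((fun t => - C / t) b) ((fun t => - C / t) a)).
  2: { unfold minus, plus, opp; simpl. field. lra. }
  apply (@is_RInt_derive R_CompleteNormedModule).
  - intros x Hx. auto_derive. intro; lra. field. intro; lra.
  - intros x Hx. apply (@ex_derive_continuous R_AbsRing R_NormedModule). auto_derive. intro; nra.
Qed.

Lemma gf_lim : forall s, 0 <= s ->
  exists l, filterlim (fun ab => RInt (gf s) (fst ab) (snd ab)) FF (locally l).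
Proof.
  intros s Hs.
  apply (filterlim_locally_cauchy (F := FF)).
  intro eps.
  pose (C := Cb s). assert (HC : 0 < C) by apply Cb_pos.
  pose (d := Rmin 1 (eps/2)). pose (M := Rmax 1 (2*C/eps + 1)).
  assert (Hd : 0 < d) by (apply Rmin_glb_lt; [lra| pose proof (cond_pos eps); lra]).
  assert (Hd2 : d <= eps/2) by apply Rmin_r.
  assert (Hd1 : d <= 1) by apply Rmin_l.
  assert (HM1 : 1 <= M) by apply Rmax_l.
  assert (HM2 : 2*C/eps + 1 <= M) by apply Rmax_r.
  assert (He : 0 < eps) by apply cond_pos.
  exists (fun ab => 0 < fst ab < d /\ M < snd ab). split.
  { apply FF_ev; auto. }
  intros [a b] [a' b'] [Ha Hb] [Ha' Hb']; simpl in *.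
  apply ball_R.
  assert (Ex : forall u v, 0 < u -> 0 < v -> ex_RInt (gf s) u v) by (intros; apply gf_exRInt; auto).
  assert (E : RInt (gf s) a' b' - RInt (gf s) a b = RInt (gf s) a' a + RInt (gf s) b b').
  { rewrite <- (@RInt_Chasles R_CompleteNormedModule (gf s) a' a b') by (apply Ex; lra).
    rewrite <- (@RInt_Chasles R_CompleteNormedModule (gf s) a b b') by (apply Ex; lra).
    do 2 change (plus ?x ?y) with (x + y). ring. }
  rewrite E.
  assert (B1 : Rabs (RInt (gf s) a' a) < eps/2).
  { eapply Rle_lt_trans. apply (RInt_abs_bound _ (fun _ => 1)).
    apply Ex; lra. apply ex_RInt_const.
    intros t Ht. assert (0 < Rmin a' a) by (apply Rmin_glb_lt; lra).
    assert (Rmax a' a < 1) by (apply Rmax_lub_lt; lra).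
    rewrite Rabs_right by (apply Rle_ge, Rlt_le, gf_pos). apply gf_le1; lra.
    rewrite RInt_const. change (scal ?x 1) with (x * 1).
    apply Rabs_lt_between. split; nra. }
  assert (B2 : Rabs (RInt (gf s) b b') < eps/2).
  { eapply Rle_lt_trans. apply (RInt_abs_bound _ (fun t => C / (t*t))).
    apply Ex; lra.
    apply (@ex_RInt_continuous R_CompleteNormedModule). intros z Hz.
    assert (0 < Rmin b b') by (apply Rmin_glb_lt; lra).
    apply (@ex_derive_continuous R_AbsRing R_NormedModule). auto_derive. intro; nra.
    intros t Ht. assert (0 < Rmin b b') by (apply Rmin_glb_lt; lra).
    rewrite Rabs_right by (apply Rle_ge, Rlt_le, gf_pos). apply gf_tail; lra.
    rewrite inv2_RInt by lra.
    assert (C / b < eps / 2).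
    { apply Rmult_lt_reg_r with (2*b/eps). apply Rdiv_lt_0_compat; lra.
      replace (C / b * (2 * b / eps)) with (2*C/eps) by (field; lra).
      replace (eps / 2 * (2 * b / eps)) with b by (field; lra). lra. }
    assert (C / b' < eps / 2).
    { apply Rmult_lt_reg_r with (2*b'/eps). apply Rdiv_lt_0_compat; lra.
      replace (C / b' * (2 * b' / eps)) with (2*C/eps) by (field; lra).
      replace (eps / 2 * (2 * b' / eps)) with b' by (field; lra). lra. }
    assert (0 < C / b) by (apply Rdiv_lt_0_compat; lra).
    assert (0 < C / b') by (apply Rdiv_lt_0_compat; lra).
    apply Rabs_lt_between. split; lra. }
  pose proof (Rabs_triang (RInt (gf s) a' a) (RInt (gf s) b b')). lra.
Qed.

Lemma Gamma_lim : forall x, 1 <= x ->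
  filterlim (fun ab => RInt (gf (x-1)) (fst ab) (snd ab)) FF (locally (Gamma x)).
Proof.
  intros x Hx. destruct (gf_lim (x-1)) as [l Hl]. lra.
  replace (Gamma x) with l. exact Hl.
  symmetry. unfold Gamma. apply is_RInt_gen_unique.
  unfold is_RInt_gen.
  apply filterlimi_lim_ext_loc with (fun ab => RInt (gf (x-1)) (fst ab) (snd ab)).
  - eapply filter_imp. 2: apply (FF_ev 1 1); lra.
    intros [a b] [Ha Hb]; simpl in *. apply (@RInt_correct R_CompleteNormedModule).
    apply gf_exRInt; lra.
  - exact Hl.
Qed.

Lemma Gamma_pos : forall x, 1 <= x -> exp (-2) <= Gamma x.
Proof.
  intros x Hx.
  assert (H := Gamma_lim x Hx).
  assert (Hc := filterlim_const (F := FF) (exp (-2))).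
  assert (HR := filterlim_le (F := FF) (fun _ => exp (-2)) (fun ab => RInt (gf (x-1)) (fst ab) (snd ab)) (Finite (exp (-2))) (Finite (Gamma x))).
  simpl in HR. apply HR; auto.
  eapply filter_imp. 2: apply (FF_ev 1 2); lra.
  intros [a b] [Ha Hb]; simpl in *.
  assert (Ex : forall u v, 0 < u -> 0 < v -> ex_RInt (gf (x-1)) u v) by (intros; apply gf_exRInt; auto).
  rewrite <- (@RInt_Chasles R_CompleteNormedModule (gf (x-1)) a 1 b) by (apply Ex; lra).
  rewrite <- (@RInt_Chasles R_CompleteNormedModule (gf (x-1)) 1 2 b) by (apply Ex; lra).
  change (plus ?u ?v) with (u + v). change (plus ?u ?v) with (u + v).
  assert (0 <= RInt (gf (x-1)) a 1).
  { apply RInt_ge_0. lra. apply Ex; lra. intros; apply Rlt_le, gf_pos. }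
  assert (0 <= RInt (gf (x-1)) 2 b).
  { apply RInt_ge_0. lra. apply Ex; lra. intros; apply Rlt_le, gf_pos. }
  assert (exp (-2) <= RInt (gf (x-1)) 1 2).
  { replace (exp (-2)) with (RInt (fun _ => exp (-2)) 1 2).
    2: { rewrite RInt_const. transitivity ((2-1) * exp (-2)); [reflexivity| change ((2-1) * exp (-2) = exp (-2)); ring]. }
    apply RInt_le. lra. apply ex_RInt_const. apply Ex; lra.
    intros t Ht. unfold gf, Rpower.
    assert (0 <= ln t) by (rewrite <- ln_1; apply ln_le; lra).
    assert (1 <= exp ((x-1) * ln t)).
    { pose proof (exp_le_exp 0 ((x-1) * ln t)) as Hq. rewrite exp_0 in Hq. apply Hq. nra. }
    assert (exp (-2) <= exp (- t)) by (apply exp_le_exp; lra).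
    pose proof (exp_pos (-2)). nra. }
  lra.
Qed.

Lemma lim_plus : forall {T} {F : (T -> Prop) -> Prop} {FT : Filter F} (f g : T -> R) a b,
  filterlim f F (locally a) -> filterlim g F (locally b) ->
  filterlim (fun x => f x + g x) F (locally (a + b)).
Proof.
  intros T F FT f g a b Hf Hg.
  eapply filterlim_comp_2; eauto. apply (@filterlim_plus R_AbsRing R_NormedModule).
Qed.

Lemma lim_scal : forall {T} {F : (T -> Prop) -> Prop} {FT : Filter F} (f : T -> R) c a,
  filterlim f F (locally a) -> filterlim (fun x => c * f x) F (locally (c * a)).
Proof.
  intros T F FT f c a Hf.
  eapply filterlim_comp; eauto. apply (@filterlim_scal_r R_AbsRing R_NormedModule).
Qed.

Lemma lim_opp : forall {T} {F : (T -> Prop) -> Prop} {FT : Filter F} (f : T -> R) a,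
  filterlim f F (locally a) -> filterlim (fun x => - f x) F (locally (- a)).
Proof.
  intros T F FT f a Hf.
  eapply filterlim_comp; eauto. apply (@filterlim_opp R_AbsRing R_NormedModule).
Qed.

Lemma bnd0 : forall x, 1 <= x -> filterlim (fun ab => gf x (fst ab)) FF (locally 0).
Proof.
  intros x Hx. apply filterlim_locally. intro eps.
  assert (He : 0 < eps) by apply cond_pos.
  eapply filter_imp. 2: apply (FF_ev (Rmin 1 eps) 0); apply Rmin_glb_lt; lra.
  intros [a b] [Ha _]; simpl in *. apply ball_R.
  pose proof (Rmin_l 1 eps). pose proof (Rmin_r 1 eps).
  pose proof (gf_le_t x a Hx ltac:(lra)). pose proof (gf_pos x a).
  apply Rabs_lt_between. lra.
Qed.

Lemma bndinf : forall x, 0 <= x -> filterlim (fun ab => gf x (snd ab)) FF (locally 0).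
Proof.
  intros x Hx. apply filterlim_locally. intro eps.
  assert (He : 0 < eps) by apply cond_pos.
  pose proof (Cb_pos x).
  eapply filter_imp. 2: apply (FF_ev 1 (Rmax 1 (Cb x / eps))); lra.
  intros [a b] [_ Hb]; simpl in *. apply ball_R.
  pose proof (Rmax_l 1 (Cb x / eps)). pose proof (Rmax_r 1 (Cb x / eps)).
  pose proof (gf_tail x b Hx ltac:(lra)). pose proof (gf_pos x b).
  assert (Cb x / (b * b) <= Cb x / b).
  { apply Rmult_le_compat_l. lra. apply Rinv_le_contravar; nra. }
  assert (Cb x / b < eps).
  { apply Rmult_lt_reg_r with b. lra. unfold Rdiv. rewrite Rmult_assoc, Rinv_l by lra.
    apply Rmult_lt_reg_r with (/ eps). apply Rinv_0_lt_compat; lra.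
    replace (eps * b * / eps) with b by (field; lra). lra. }
  apply Rabs_lt_between. lra.
Qed.

Lemma ibp : forall x a b, 1 <= x -> 0 < a -> 0 < b ->
  RInt (gf x) a b = (gf x a - gf x b) + x * RInt (gf (x-1)) a b.
Proof.
  intros x a b Hx Ha Hb.
  assert (Hm : 0 < Rmin a b) by (apply Rmin_glb_lt; lra).
  assert (H1 : is_RInt (fun t => gf x t - x * gf (x-1) t) a b
                 (minus ((fun t => - gf x t) b) ((fun t => - gf x t) a))).
  { apply (@is_RInt_derive R_CompleteNormedModule (fun t => - gf x t)).
    - intros t Ht. unfold gf, Rpower. auto_derive. lra.
      assert (Hq : exp ((x-1) * ln t) = exp (x * ln t) / t).
      { replace (x * ln t) with ((x-1) * ln t + ln t) by ring.
        rewrite exp_plus, exp_ln by lra. field. lra. }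
      rewrite Hq. field. intro; lra.
    - intros t Ht. apply (@ex_derive_continuous R_AbsRing R_NormedModule).
      unfold gf, Rpower. auto_derive. lra. }
  assert (H2 : is_RInt (fun t => scal x (gf (x-1) t)) a b (scal x (RInt (gf (x-1)) a b))).
  { apply (@is_RInt_scal R_NormedModule). apply (@RInt_correct R_CompleteNormedModule). apply gf_exRInt; lra. }
  pose proof (@is_RInt_plus R_NormedModule _ _ _ _ _ _ H1 H2) as H3.
  apply is_RInt_unique.
  eapply is_RInt_ext. 2: { refine (eq_ind _ (fun v => is_RInt _ a b v) H3 _ _).
    change (minus (- gf x b) (- gf x a) + x * RInt (gf (x-1)) a b =
            gf x a - gf x b + x * RInt (gf (x - 1)) a b). unfold minus, plus, opp; simpl. ring. }
  intros t Ht. change (gf x t - x * gf (x-1) t + x * gf (x-1) t = gf x t). ring.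
Qed.

Lemma Gamma_succ : forall x, 1 <= x -> Gamma (x + 1) = x * Gamma x.
Proof.
  intros x Hx.
  pose proof (Gamma_lim (x+1) ltac:(lra)) as H1.
  replace (x + 1 - 1) with x in H1 by ring.
  assert (H2 : filterlim (fun ab => (gf x (fst ab) - gf x (snd ab)) + x * RInt (gf (x-1)) (fst ab) (snd ab))
                 FF (locally ((0 + - 0) + x * Gamma x))).
  { apply lim_plus. apply lim_plus. apply bnd0; lra.
    apply lim_opp. apply bndinf; lra.
    apply lim_scal. apply Gamma_lim; lra. }
  apply (filterlim_ext_loc (F := FF) _ (fun ab => RInt (gf x) (fst ab) (snd ab))) in H2.
  - replace (x * Gamma x) with ((0 + - 0) + x * Gamma x) by ring.
    symmetry. apply (filterlim_locally_unique (F := FF) (fun ab => RInt (gf x) (fst ab) (snd ab))); assumption.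
  - eapply filter_imp. 2: apply (FF_ev 1 1); lra.
    intros [a b] [Ha Hb]; simpl in *. rewrite (ibp x a b) by lra. ring.
Qed.

Lemma amgm : forall u v l, 0 < u -> 0 < v -> 0 < l < 1 ->
  exp (l * ln u + (1-l) * ln v) <= l * u + (1-l) * v.
Proof.
  intros u v l Hu Hv Hl.
  set (m := l * u + (1-l) * v).
  assert (Hm : 0 < m) by (unfold m; nra).
  assert (H1 : ln u - ln m <= u / m - 1).
  { rewrite <- ln_div by lra. apply ln_le_sub1. apply Rdiv_lt_0_compat; lra. }
  assert (H2 : ln v - ln m <= v / m - 1).
  { rewrite <- ln_div by lra. apply ln_le_sub1. apply Rdiv_lt_0_compat; lra. }
  assert (H3 : l * (ln u - ln m) <= l * (u/m - 1)) by (apply Rmult_le_compat_l; lra).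
  assert (H4 : (1-l) * (ln v - ln m) <= (1-l) * (v/m - 1)) by (apply Rmult_le_compat_l; lra).
  assert (H5 : l * (u/m - 1) + (1-l) * (v/m - 1) = 0).
  { replace (l * (u/m - 1) + (1-l) * (v/m - 1)) with ((l * u + (1-l) * v) / m - 1) by (field; intro; lra).
    fold m. field. intro; lra. }
  apply Rle_trans with (exp (ln m)). apply exp_le_exp. lra. rewrite exp_ln by lra. unfold m; lra.
Qed.

Lemma Gamma_logconv : forall x y l, 1 <= x -> 1 <= y -> 0 < l < 1 ->
  ln (Gamma (l * x + (1-l) * y)) <= l * ln (Gamma x) + (1-l) * ln (Gamma y).
Proof.
  intros x y l Hx Hy Hl.
  set (z := l * x + (1-l) * y).
  assert (Hz : 1 <= z) by (unfold z; nra).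
  set (A := Gamma x). set (B := Gamma y).
  assert (HA : 0 < A) by (pose proof (Gamma_pos x Hx); pose proof (exp_pos (-2)); unfold A; lra).
  assert (HB : 0 < B) by (pose proof (Gamma_pos y Hy); pose proof (exp_pos (-2)); unfold B; lra).
  set (K := exp (l * ln A + (1-l) * ln B)).
  assert (HK : 0 < K) by apply exp_pos.
  assert (PW : forall t, 0 < t -> gf (z-1) t <= K * (l / A * gf (x-1) t + (1-l) / B * gf (y-1) t)).
  { intros t Ht.
    set (u := gf (x-1) t / A). set (v := gf (y-1) t / B).
    assert (Hu : 0 < u) by (apply Rdiv_lt_0_compat; auto; apply gf_pos).
    assert (Hv : 0 < v) by (apply Rdiv_lt_0_compat; auto; apply gf_pos).
    assert (E : gf (z-1) t = K * exp (l * ln u + (1-l) * ln v)).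
    { unfold K, u, v. rewrite <- exp_plus. rewrite !ln_div by (auto; apply gf_pos).
      rewrite !gf_exp, !ln_exp. f_equal. unfold z. ring. }
    rewrite E. apply Rmult_le_compat_l. lra.
    replace (l / A * gf (x - 1) t + (1 - l) / B * gf (y - 1) t) with (l * u + (1-l) * v)
      by (unfold u, v; field; lra).
    apply amgm; auto. }
  assert (EV : FF (fun ab => RInt (gf (z-1)) (fst ab) (snd ab) <=
        K * (l / A * RInt (gf (x-1)) (fst ab) (snd ab) + (1-l) / B * RInt (gf (y-1)) (fst ab) (snd ab)))).
  { eapply filter_imp. 2: apply (FF_ev 1 1); lra.
    intros [a b] [Ha Hb]; simpl in *.
    assert (HI : is_RInt (fun t => scal K (plus (scal (l/A) (gf (x-1) t)) (scal ((1-l)/B) (gf (y-1) t)))) a b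
        (scal K (plus (scal (l/A) (RInt (gf (x-1)) a b)) (scal ((1-l)/B) (RInt (gf (y-1)) a b))))).
    { apply (@is_RInt_scal R_NormedModule). apply (@is_RInt_plus R_NormedModule).
      apply (@is_RInt_scal R_NormedModule). apply (@RInt_correct R_CompleteNormedModule). apply gf_exRInt; lra.
      apply (@is_RInt_scal R_NormedModule). apply (@RInt_correct R_CompleteNormedModule). apply gf_exRInt; lra. }
    change (RInt (gf (z-1)) a b <= scal K (plus (scal (l/A) (RInt (gf (x-1)) a b)) (scal ((1-l)/B) (RInt (gf (y-1)) a b)))).
    rewrite <- (is_RInt_unique _ _ _ _ HI).
    apply RInt_le. lra. apply gf_exRInt; lra. exists (scal K (plus (scal (l/A) (RInt (gf (x-1)) a b)) (scal ((1-l)/B) (RInt (gf (y-1)) a b)))). exact HI.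
    intros t Ht. apply PW. lra. }
  assert (L1 := Gamma_lim z Hz).
  assert (L2 : filterlim (fun ab => K * (l / A * RInt (gf (x-1)) (fst ab) (snd ab) + (1-l) / B * RInt (gf (y-1)) (fst ab) (snd ab))) FF
                 (locally (K * (l / A * A + (1-l)/B * B)))).
  { apply lim_scal. apply lim_plus; apply lim_scal; apply Gamma_lim; auto. }
  assert (HR := filterlim_le (F := FF) _ _ (Finite (Gamma z)) (Finite (K * (l / A * A + (1-l)/B * B))) EV L1 L2).
  simpl in HR.
  replace (K * (l / A * A + (1 - l) / B * B)) with K in HR by (field; lra).
  unfold K in HR. rewrite <- (ln_exp (l * ln A + (1 - l) * ln B)).
  apply ln_le; auto. pose proof (Gamma_pos z Hz); pose proof (exp_pos (-2)); lra.
Qed.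
Lemma ln_ge_1sub : forall y, 0 < y -> 1 - / y <= ln y.
Proof. intros y Hy. pose proof (ln_le_sub1 (/ y) (Rinv_0_lt_compat _ Hy)).
  rewrite ln_Rinv in H by lra. lra. Qed.

Definition useq (n : nat) : R :=
  sum_f_R0 (fun k => / INR (S k)) n - ln (INR (S n)).

Lemma INRS_pos : forall n, 0 < INR (S n).
Proof. intros; apply lt_0_INR; lia. Qed.

Lemma useq_decr : forall n, useq (S n) <= useq n.
Proof.
  intro n. unfold useq. rewrite tech5.
  pose proof (INRS_pos n). pose proof (INRS_pos (S n)).
  assert (E: INR (S (S n)) = INR (S n) + 1) by (rewrite S_INR; ring).
  pose proof (ln_ge_1sub (INR (S (S n)) / INR (S n))).
  rewrite ln_div in H1 by lra.
  assert (0 < INR (S (S n)) / INR (S n)) by (apply Rdiv_lt_0_compat; lra).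
  specialize (H1 H2).
  assert (/ (INR (S (S n)) / INR (S n)) = 1 - / INR (S (S n))).
  { rewrite E. field. lra. }
  lra.
Qed.

Lemma useq_ge0 : forall n, 0 <= useq n.
Proof.
  assert (forall n, 0 <= sum_f_R0 (fun k => / INR (S k)) n - ln (INR (S (S n)))).
  { induction n.
    - simpl. pose proof (ln_le_sub1 (1+1)). lra.
    - rewrite tech5.
      pose proof (INRS_pos n). pose proof (INRS_pos (S n)). pose proof (INRS_pos (S (S n))).
      assert (E: INR (S (S (S n))) = INR (S (S n)) + 1) by (rewrite S_INR; ring).
      pose proof (ln_le_sub1 (INR (S (S (S n))) / INR (S (S n)))).
      rewrite ln_div in H2 by lra.
      assert (0 < INR (S (S (S n))) / INR (S (S n))) by (apply Rdiv_lt_0_compat; lra).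
      specialize (H2 H3).
      assert (INR (S (S (S n))) / INR (S (S n)) - 1 = / INR (S (S n))).
      { rewrite E. field. lra. }
      lra. }
  intro n. specialize (H n). unfold useq.
  assert (ln (INR (S n)) <= ln (INR (S (S n)))).
  { apply Rlt_le, ln_increasing. apply INRS_pos. rewrite (S_INR (S n)); lra. }
  lra.
Qed.

Lemma useq_lim : is_lim_seq useq euler_gamma.
Proof.
  assert (H: ex_finite_lim_seq useq).
  { apply (ex_finite_lim_seq_decr _ 0). apply useq_decr. apply useq_ge0. }
  destruct H as [l Hl].
  unfold euler_gamma. fold useq. rewrite (is_lim_seq_unique _ _ Hl). exact Hl.
Qed.

Definition Lg x := ln (Gamma x).

Lemma Gamma_pos' : forall x, 1 <= x -> 0 < Gamma x.
Proof. intros x Hx. pose proof (Gamma_pos x Hx). pose proof (exp_pos (-2)). lra. Qed.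

Lemma Lg_succ : forall x, 1 <= x -> Lg (x + 1) = Lg x + ln x.
Proof.
  intros x Hx. unfold Lg. rewrite Gamma_succ by auto.
  rewrite ln_mult by (try lra; apply Gamma_pos'; auto). ring.
Qed.

Lemma slope : forall z w, 2 <= z -> z < w -> (w - z) * ln (z - 1) <= Lg w - Lg z.
Proof.
  intros z w Hz Hw.
  set (l := (w - z) / (w - z + 1)).
  assert (Hl : 0 < l < 1).
  { unfold l. split. apply Rdiv_lt_0_compat; lra.
    apply Rmult_lt_reg_r with (w - z + 1). lra. unfold Rdiv. rewrite Rmult_assoc, Rinv_l by lra. lra. }
  pose proof (Gamma_logconv (z - 1) w l ltac:(lra) ltac:(lra) Hl) as H.
  replace (l * (z - 1) + (1 - l) * w) with z in H by (unfold l; field; lra).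
  pose proof (Lg_succ (z - 1) ltac:(lra)) as H2. replace (z - 1 + 1) with z in H2 by ring.
  fold (Lg z) (Lg (z-1)) (Lg w) in H.
  rewrite H2 in H.
  assert (H3 : (w - z + 1) * (Lg (z-1) + ln (z-1)) <= (w - z + 1) * (l * Lg (z - 1) + (1 - l) * Lg w))
    by (apply Rmult_le_compat_l; lra).
  replace ((w - z + 1) * (l * Lg (z - 1) + (1 - l) * Lg w)) with ((w - z) * Lg (z-1) + Lg w) in H3
    by (unfold l; field; lra).
  rewrite H2. nra.
Qed.

Lemma Lg_shift : forall x, 1 <= x -> forall m,
  Lg (x + INR (S m)) = Lg x + sum_f_R0 (fun k => ln (x + INR k)) m.
Proof.
  intros x Hx. induction m.
  - simpl. rewrite Rplus_0_r. apply Lg_succ; auto.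
  - rewrite tech5. replace (x + INR (S (S m))) with (x + INR (S m) + 1) by (rewrite (S_INR (S m)); ring).
    rewrite Lg_succ. rewrite IHm. ring. pose proof (pos_INR (S m)). lra.
Qed.

Lemma sum_bound : forall x y, 1 <= x -> x <= y -> forall m,
  sum_f_R0 (fun k => ln (y + INR k)) m - sum_f_R0 (fun k => ln (x + INR k)) m
  <= (y - x) * sum_f_R0 (fun k => / INR (S k)) m.
Proof.
  intros x y Hx Hy.
  assert (K : forall k, ln (y + INR k) - ln (x + INR k) <= (y - x) * / INR (S k)).
  { intro k. pose proof (pos_INR k).
    rewrite <- ln_div by lra.
    eapply Rle_trans. apply ln_le_sub1. apply Rdiv_lt_0_compat; lra.
    replace ((y + INR k) / (x + INR k) - 1) with ((y - x) * / (x + INR k)) by (field; lra).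
    apply Rmult_le_compat_l. lra. apply Rinv_le_contravar. apply INRS_pos. rewrite S_INR. lra. }
  induction m.
  - simpl. specialize (K 0%nat). simpl in K. exact K.
  - rewrite !tech5. specialize (K (S m)). lra.
Qed.

Lemma main_bound : forall x y, 1 <= x -> x < y -> forall m, - (y - x) * useq m <= Lg y - Lg x.
Proof.
  intros x y Hx Hy m.
  pose proof (INRS_pos m) as Hm.
  assert (Hm1 : 1 <= INR (S m)) by (rewrite S_INR; pose proof (pos_INR m); lra).
  pose proof (slope (x + INR (S m)) (y + INR (S m)) ltac:(lra) ltac:(lra)) as H.
  rewrite !Lg_shift in H by lra.
  replace (y + INR (S m) - (x + INR (S m))) with (y - x) in H by ring.
  assert (ln (INR (S m)) <= ln (x + INR (S m) - 1)) by (apply ln_le; lra).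
  assert ((y - x) * ln (INR (S m)) <= (y - x) * ln (x + INR (S m) - 1)) by (apply Rmult_le_compat_l; lra).
  pose proof (sum_bound x y Hx ltac:(lra) m).
  unfold useq. nra.
Qed.

Lemma Lg_mono : forall x y, 1 <= x -> x <= y -> Lg x + euler_gamma * x <= Lg y + euler_gamma * y.
Proof.
  intros x y Hx Hy. destruct (Rle_lt_or_eq_dec x y Hy) as [Hlt|Heq]; [|subst; lra].
  assert (HL := is_lim_seq_le (fun m => - (y - x) * useq m) (fun _ => Lg y - Lg x)
                  (Finite (- (y - x) * euler_gamma)) (Finite (Lg y - Lg x))
                  (main_bound x y Hx Hlt)).
  simpl in HL.
  assert (- (y - x) * euler_gamma <= Lg y - Lg x).
  { apply HL. apply (is_lim_seq_scal_l useq (- (y - x)) euler_gamma). apply useq_lim.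
    apply is_lim_seq_const. }
  nra.
Qed.

Lemma rp_pos : forall p x, 0 < x -> 0 < rising_prod x p.
Proof.
  induction p; intros x Hx; cbn [rising_prod]; auto.
  apply Rmult_lt_0_compat. apply IHp; auto. pose proof (pos_INR (S p)). lra.
Qed.

Lemma rp_mono : forall p x y, 0 < x < y -> rising_prod x p < rising_prod y p.
Proof.
  induction p; intros x y H; cbn [rising_prod]. lra.
  pose proof (IHp x y H). pose proof (rp_pos p x ltac:(lra)). pose proof (pos_INR (S p)).
  apply Rlt_trans with (rising_prod y p * (x + INR (S p))).
  apply Rmult_lt_compat_r; lra. apply Rmult_lt_compat_l; lra.
Qed.

Definition Fn (p : nat) (a b x : R) := a * (Lg x + euler_gamma * x) + b * ln (rising_prod x p).

Lemma Fn_strict : forall p a b x y, 0 < a -> 0 < b -> 1 <= x -> x < y -> Fn p a b x < Fn p a b y.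
Proof.
  intros p a b x y Ha Hb Hx Hy. unfold Fn.
  pose proof (Lg_mono x y Hx ltac:(lra)).
  assert (ln (rising_prod x p) < ln (rising_prod y p)).
  { apply ln_increasing. apply rp_pos; lra. apply rp_mono; lra. }
  assert (a * (Lg x + euler_gamma * x) <= a * (Lg y + euler_gamma * y)) by (apply Rmult_le_compat_l; lra).
  assert (b * ln (rising_prod x p) < b * ln (rising_prod y p)) by (apply Rmult_lt_compat_l; lra).
  lra.
Qed.

Lemma G_eq : forall p a b x, 1 <= x ->
  Rpower (Gamma x) a / Rpower (Gamma_p p x) b =
  exp (Fn p a b x - x * (a * euler_gamma + b * ln (INR p)) - b * ln (INR (fact p))).
Proof.
  intros p a b x Hx.
  assert (Hf : 0 < INR (fact p)) by (apply lt_0_INR; apply lt_O_fact).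
  assert (Hr : 0 < rising_prod x p) by (apply rp_pos; lra).
  assert (Hg : ln (Gamma_p p x) = ln (INR (fact p)) + x * ln (INR p) - ln (rising_prod x p)).
  { unfold Gamma_p. rewrite ln_div; auto. rewrite ln_mult; auto. unfold Rpower at 1. rewrite ln_exp. ring.
    apply exp_pos. apply Rmult_lt_0_compat; auto. apply exp_pos. }
  unfold Rpower at 1 2. rewrite Hg. unfold Rdiv. rewrite <- exp_Ropp, <- exp_plus.
  f_equal. unfold Fn, Lg. ring.
Qed.

Lemma Omega_eq : forall p a b alpha beta t, 1 <= alpha + beta * t ->
  Omega p a b alpha beta t =
  exp (Fn p a b (alpha + beta * t) - alpha * (a * euler_gamma + b * ln (INR p)) - b * ln (INR (fact p))).
Proof.
  intros p a b alpha beta t H. unfold Omega.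
  replace (Rpower (INR p) (b * beta * t) * exp (a * beta * euler_gamma * t) * Rpower (Gamma (alpha + beta * t)) a /
   Rpower (Gamma_p p (alpha + beta * t)) b) with
   (Rpower (INR p) (b * beta * t) * exp (a * beta * euler_gamma * t) * (Rpower (Gamma (alpha + beta * t)) a /
   Rpower (Gamma_p p (alpha + beta * t)) b)) by (unfold Rdiv; ring).
  rewrite G_eq by auto. unfold Rpower. rewrite <- !exp_plus. f_equal. ring.
Qed.

Theorem theorem3p7 (p : nat) (a b alpha beta : R)
  (hp : (1 <= p)%nat) (ha : 0 < a) (hb : 0 < b)
  (halpha : 0 < alpha) (hbeta : 0 < beta)
  (hab : forall t : R, 0 < t -> alpha + beta * t > 1) :
  (forall s t : R, 0 < s -> s < t ->
     Omega p a b alpha beta s < Omega p a b alpha beta t)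
  /\
  (forall t : R, 0 < t < 1 ->
     Rpower (INR p) (- (b * beta * t)) * exp (- (a * beta * euler_gamma * t))
       * Rpower (Gamma alpha) a / Rpower (Gamma_p p alpha) b
     < Rpower (Gamma (alpha + beta * t)) a / Rpower (Gamma_p p (alpha + beta * t)) b
     /\
     Rpower (Gamma (alpha + beta * t)) a / Rpower (Gamma_p p (alpha + beta * t)) b
     < Rpower (INR p) (b * beta * (1 - t)) * exp (a * beta * euler_gamma * (1 - t))
       * Rpower (Gamma (alpha + beta)) a / Rpower (Gamma_p p (alpha + beta)) b).
Proof.
  assert (Ha1 : 1 <= alpha).
  { destruct (Rle_or_lt 1 alpha) as [H|H]; auto.
    assert (0 < (1 - alpha) / beta) by (apply Rdiv_lt_0_compat; lra).
    specialize (hab _ H0). replace (alpha + beta * ((1 - alpha) / beta)) with 1 in hab by (field; lra). lra. }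
  split.
  - intros s t Hs Hst.
    pose proof (hab s Hs). pose proof (hab t ltac:(lra)).
    rewrite !Omega_eq by lra. apply exp_increasing.
    pose proof (Fn_strict p a b (alpha + beta * s) (alpha + beta * t) ha hb ltac:(lra) ltac:(nra)). lra.
  - intros t Ht. pose proof (hab t ltac:(lra)). pose proof (hab 1 ltac:(lra)).
    replace (alpha + beta * 1) with (alpha + beta) in H0 by ring.
    split.
    + replace (Rpower (INR p) (- (b * beta * t)) * exp (- (a * beta * euler_gamma * t)) * Rpower (Gamma alpha) a /
        Rpower (Gamma_p p alpha) b) with
        (Rpower (INR p) (- (b * beta * t)) * exp (- (a * beta * euler_gamma * t)) * (Rpower (Gamma alpha) a /
        Rpower (Gamma_p p alpha) b)) by (unfold Rdiv; ring).
      rewrite !G_eq by lra. unfold Rpower. rewrite <- !exp_plus. apply exp_increasing.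
      pose proof (Fn_strict p a b alpha (alpha + beta * t) ha hb Ha1 ltac:(nra)).
      nra.
    + replace (Rpower (INR p) (b * beta * (1 - t)) * exp (a * beta * euler_gamma * (1 - t)) *
        Rpower (Gamma (alpha + beta)) a / Rpower (Gamma_p p (alpha + beta)) b) with
        (Rpower (INR p) (b * beta * (1 - t)) * exp (a * beta * euler_gamma * (1 - t)) *
        (Rpower (Gamma (alpha + beta)) a / Rpower (Gamma_p p (alpha + beta)) b)) by (unfold Rdiv; ring).
      rewrite !G_eq by lra. unfold Rpower. rewrite <- !exp_plus. apply exp_increasing.
      pose proof (Fn_strict p a b (alpha + beta * t) (alpha + beta) ha hb ltac:(lra) ltac:(nra)).
      nra.
Qed.
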